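(* For every fixed integer $r\ge1$ and every family $F$ of functions whose codomain has size $k$ and with $\mathrm{opt}_{\mathrm{std}}(F)\le r$, we have $\mathrm{opt}_{\mathrm{amb},r}(F)\le (rk)^{\mathrm{opt}_{\mathrm{std}}(F)}$.
   Context: Let $F$ be a family of functions from $X$ to $Y$. In online learning an adversary secretly fixes $f\in F$ and presents inputs; the learner guesses values of $f$. In the standard model each input is presented singly and after the guess the true value is revealed; $\mathrm{opt}_{\mathrm{std}}(F)$ is the maximum number of incorrect guesses under optimal play by both sides. In the $r$-delayed ambiguous reinforcement model, each round $i$ consists of $r$ inputs $x_{i,1},\dots,x_{i,r}$ given one at a time: the learner must guess $f(x_{i,j})$ before receiving $x_{i,j+1}$; after all $r$ guesses the adversary says YES if all $r$ guesses were correct and NO otherwise. A mistake is a round with answer NO. $\mathrm{opt}_{\mathrm{amb},r}(F)$ is the maximum number of mistakes under optimal play by both learner and adversary (answers consistent with some $f\in F$). *)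

(* Defs.v *)
From mathcomp Require Import all_boot.
Set Implicit Arguments. Unset Strict Implicit. Unset Printing Implicit Defensive.

Section Learning.
Variables (X : Type) (Y : finType).

Definition std_learner := seq (X * Y) -> X -> Y.

Fixpoint std_mistakes (L : std_learner) (f : X -> Y) (h : seq (X * Y))
    (xs : seq X) : nat :=
  match xs with
  | [::] => 0
  | x :: xs' => (L h x != f x) + std_mistakes L f (rcons h (x, f x)) xs'
  end.

Definition std_bound (F : (X -> Y) -> Prop) (m : nat) : Prop :=
  exists L : std_learner, forall f, F f -> forall xs : seq X,
    std_mistakes L f [::] xs <= m.

Definition opt_std_is (F : (X -> Y) -> Prop) (d : nat) : Prop :=
  std_bound F d /\ forall d', std_bound F d' -> d <= d'.

(* A learner sees the history of past rounds (their inputs and the YES/NO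
   answer), the inputs already given in the current round, and the current
   input. (Its own past guesses are determined by this data.) *)
Definition amb_learner := seq (seq X * bool) -> seq X -> X -> Y.

Fixpoint round_ok (L : amb_learner) (f : X -> Y) (h : seq (seq X * bool))
    (pre xs : seq X) : bool :=
  match xs with
  | [::] => true
  | x :: xs' => (L h pre x == f x) && round_ok L f h (rcons pre x) xs'
  end.

Fixpoint amb_mistakes (L : amb_learner) (f : X -> Y) (h : seq (seq X * bool))
    (rs : seq (seq X)) : nat :=
  match rs with
  | [::] => 0
  | xs :: rs' =>
      let b := round_ok L f h [::] xs in
      (~~ b) + amb_mistakes L f (rcons h (xs, b)) rs'
  end.

Definition amb_bound (r : nat) (F : (X -> Y) -> Prop) (m : nat) : Prop :=
  exists L : amb_learner, forall f, F f -> forall rs : seq (seq X),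
    all (fun xs => size xs == r) rs -> amb_mistakes L f [::] rs <= m.

End Learning.

(* Main.v *)
Require Import Defs.
From mathcomp Require Import all_boot.
From mathcomp Require Import zify.
Set Implicit Arguments. Unset Strict Implicit. Unset Printing Implicit Defensive.

Section Pf.
Variables (X : Type) (Y : finType) (L0 : std_learner X Y) (d r : nat) (f : X -> Y).

Fixpoint predrun (h : seq (X * Y)) (xs : seq X) : seq (X * Y) :=
  match xs with [::] => h | x :: xs' => predrun (rcons h (x, L0 h x)) xs' end.

Fixpoint children (g : seq (X * Y)) (xs : seq X) : seq (seq (X * Y)) :=
  match xs with
  | [::] => [::]
  | x :: xs' => [seq rcons g (x, y) | y <- enum Y & y != L0 g x]
                  ++ children (rcons g (x, L0 g x)) xs'
  end.

Definition stT := seq (seq (seq (X * Y))).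
Definition cur (st : stT) := head [::] (head [::] st).
Definition yes_upd (st : stT) xs : stT :=
  match st with (g :: L) :: rest => (predrun g xs :: L) :: rest | _ => st end.
Fixpoint pop (st : stT) : stT :=
  match st with
  | [::] => [::]
  | L :: rest => match L with _ :: ((_ :: _) as L') => L' :: rest | _ => pop rest end
  end.
Definition no_upd (st : stT) xs : stT :=
  let C := children (cur st) xs in
  if (size st <= d) && (0 < size C) then C :: st else pop st.
Definition step (st : stT) (p : seq X * bool) :=
  if p.2 then yes_upd st p.1 else no_upd st p.1.
Definition stateOf (H : seq (seq X * bool)) := foldl step [:: [:: [::]]] H.
Definition Lrn : amb_learner X Y := fun H pre x => L0 (predrun (cur (stateOf H)) pre) x.

Lemma predrun_rcons h pre x :
  predrun h (rcons pre x) = rcons (predrun h pre) (x, L0 (predrun h pre) x).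
Proof. by elim: pre h => [|y pre IH] h //=. Qed.

Fixpoint rok g xs :=
  match xs with
  | [::] => true
  | x :: xs' => (L0 g x == f x) && rok (rcons g (x, L0 g x)) xs'
  end.

Lemma round_ok_rok H pre xs :
  round_ok Lrn f H pre xs = rok (predrun (cur (stateOf H)) pre) xs.
Proof.
elim: xs pre => [|x xs IH] pre //=. by rewrite IH predrun_rcons.
Qed.

Lemma std_cat h xs ys : std_mistakes L0 f h (xs ++ ys) =
  std_mistakes L0 f h xs + std_mistakes L0 f (h ++ [seq (x, f x) | x <- xs]) ys.
Proof.
elim: xs h => [|x xs IH] h /=; first by rewrite cats0.
by rewrite IH addnA cat_rcons.
Qed.

Definition tru (g : seq (X * Y)) := all (fun p => p.2 == f p.1) g.

Lemma tru_map g : tru g -> [seq (x, f x) | x <- map fst g] = g.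
Proof.
elim: g => [|[x y] g IH] //= /andP [/eqP /= Hy /IH ->]. by rewrite Hy.
Qed.

Definition mist (g : seq (X * Y)) := std_mistakes L0 f [::] (map fst g).

Lemma mist_rcons g p : mist (rcons g p) =
  mist g + std_mistakes L0 f [seq (x, f x) | x <- map fst g] [:: p.1].
Proof. by rewrite /mist map_rcons -cats1 std_cat. Qed.

Lemma zero_rok g xs : std_mistakes L0 f g xs = 0 -> rok g xs.
Proof.
elim: xs g => [|x xs IH] g //=.
case: (eqVneq (L0 g x) (f x)) => [Hx|Hx] //= H.
rewrite Hx; apply: IH; move: H; by rewrite add0n.
Qed.

Hypothesis std_ok : forall xs, std_mistakes L0 f [::] xs <= d.

Lemma forced_yes g xs : tru g -> d <= mist g -> rok g xs.
Proof.
move=> Hg Hd; apply: zero_rok.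
have := std_ok (map fst g ++ xs). rewrite std_cat /= tru_map // -/(mist g).
lia.
Qed.

Lemma tru_rcons g x : tru g -> tru (rcons g (x, f x)).
Proof. by move=> Hg; rewrite /tru all_rcons /= eqxx. Qed.

Lemma no_child g xs : tru g -> rok g xs = false ->
  has (fun c => tru c && (mist g < mist c)) (children g xs).
Proof.
elim: xs g => [|x xs IH] g Hg //=. rewrite has_cat.
case: (eqVneq (L0 g x) (f x)) => Hx /=.
- move=> Hr. apply/orP; right.
  have Hg' : tru (rcons g (x, L0 g x)) by rewrite Hx tru_rcons.
  apply: sub_has (IH _ Hg' Hr) => c /andP [-> H] /=.
  apply: leq_trans H. by rewrite mist_rcons ltnS leq_addr.
- move=> _. apply/orP; left. rewrite has_map. apply/hasP. exists (f x).
    by rewrite mem_filter mem_enum andbT eq_sym Hx.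
  rewrite /= tru_rcons //= mist_rcons tru_map //= Hx. lia.
Qed.

Lemma yes_tru g xs : tru g -> rok g xs ->
  tru (predrun g xs) && (mist g <= mist (predrun g xs)).
Proof.
elim: xs g => [|x xs IH] g Hg /=; first by rewrite Hg leqnn.
case/andP => /eqP Hx Hr.
have Hg' : tru (rcons g (x, L0 g x)) by rewrite Hx tru_rcons.
case/andP: (IH _ Hg' Hr) => -> H. rewrite /= (leq_trans _ H) //.
by rewrite mist_rcons leq_addr.
Qed.

Lemma size_children g xs : size (children g xs) <= size xs * #|Y|.-1.
Proof.
elim: xs g => [|x xs IH] g //=. rewrite size_cat size_map size_filter mulSn leq_add //.
set c := L0 g x.
have H1 : count (pred1 c) (enum Y) = 1 by rewrite (count_uniq_mem _ (enum_uniq _)) mem_enum.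
have := count_predC (pred1 c) (enum Y). rewrite H1 -cardE => H.
have -> : count (fun y => y != c) (enum Y) = count (predC (pred1 c)) (enum Y) by [].
by rewrite -H add1n /=.
Qed.

Definition b := r * #|Y|.-1.
Fixpoint Sd n := if n is n'.+1 then 1 + b * Sd n' else 1.
Definition S m := Sd (d - m).
Fixpoint lv (st : stT) :=
  match st with [::] => 0 | L :: rest => (size L).-1 * S (size rest) + lv rest end.
Definition pot st := lv st + S (size st).-1.

Lemma Sd_pos n : 0 < Sd n.
Proof. by case: n. Qed.

Lemma push_pot (st : stT) C : 0 < size st -> size st <= d -> 0 < size C <= b ->
  pot (C :: st) < pot st.
Proof.
move=> H1 H2 /andP [H3 H4].
have e : d - (size st).-1 = (d - size st).+1 by lia.
rewrite /pot /S /= e /=. set T := Sd (d - size st).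
have e2 : (size C).-1 * T + T = size C * T by rewrite addnC -mulSn prednK.
have : size C * T <= b * T by rewrite leq_mul2r H4 orbT.
rewrite /S. lia.
Qed.

Lemma pop_spec (st : stT) n p : n < size st -> 0 < p < size (nth [::] st n) ->
  exists n' p', [/\ n' < size (pop st), p' < size (nth [::] (pop st) n'),
    nth [::] (nth [::] (pop st) n') p' = nth [::] (nth [::] st n) p,
    (size (pop st)).-1 - n' = (size st).-1 - n &
    ((0 < p') || (n' == 0)) && (lv (pop st) + S (size (pop st)).-1 <= lv st)].
Proof.
elim: st n => [|L rest IH] n //=.
case: L => [|a [|c L']].
- case: n => [|n] /= Hn Hp; first by case/andP: Hp.
  have [n' [p' [A1 A2 A3 A4 /andP [A5 A6]]]] := IH n Hn Hp.
  exists n', p'; split => //; first lia. rewrite A5 /=. lia.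
- case: n => [|n] /=; first by move=> _ /= Hp; lia.
  move=> Hn Hp. have [n' [p' [A1 A2 A3 A4 /andP [A5 A6]]]] := IH n Hn Hp.
  exists n', p'; split => //; first lia. rewrite A5 /=. lia.
- case: n => [|n] /= Hn Hp.
  + exists 0, p.-1; split => //=.
    * lia.
    * by clear IH; case: p Hp.
    * rewrite eqxx orbT /=. lia.
  + exists n.+1, p; split => //=.
    * by case/andP: Hp.
    * case/andP: Hp => Hp1 _. rewrite Hp1 /= mulSn. lia.
Qed.

Definition Inv (st : stT) := exists n p, [/\ n < size st, p < size (nth [::] st n),
  tru (nth [::] (nth [::] st n) p),
  (size st).-1 - n <= mist (nth [::] (nth [::] st n) p) & (0 < p) || (n == 0)].

Lemma yes_upd_nth (st : stT) xs n p : 0 < p ->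
  nth [::] (nth [::] (yes_upd st xs) n) p = nth [::] (nth [::] st n) p.
Proof. by case: st => [|[|g L] rest] //; case: n => [|n] //; case: p. Qed.

Lemma yes_upd_size (st : stT) xs n :
  size (yes_upd st xs) = size st /\ size (nth [::] (yes_upd st xs) n) = size (nth [::] st n).
Proof. by case: st => [|[|g L] rest] //; case: n. Qed.

Lemma yes_upd_pot (st : stT) xs : pot (yes_upd st xs) = pot st.
Proof. by case: st => [|[|g L] rest]. Qed.

Lemma step_ok (st : stT) xs : size xs = r -> Inv st ->
  Inv (step st (xs, rok (cur st) xs)) /\
  pot (step st (xs, rok (cur st) xs)) + ~~ rok (cur st) xs <= pot st.
Proof.
move=> Hxs [n [p [Hn Hp Ht Hm Hor]]].
have Hb : size (children (cur st) xs) <= b.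
  by apply: leq_trans (size_children _ _) _; rewrite Hxs.
case: (posnP p) => [p0 | ppos].
- subst p. move: Hor; rewrite ltnn /= => /eqP n0; subst n.
  case: st Hn Hp Ht Hm Hb => [|[|g L] rest] //= _ _ Ht Hm Hb.
  rewrite /cur /= in Hb *. rewrite subn0 in Hm.
  case Hok: (rok g xs); rewrite /step /=.
  + case/andP: (yes_tru Ht Hok) => H1 H2. split; last by rewrite addn0.
    exists 0, 0; split => //=. by rewrite subn0 (leq_trans Hm).
  + have Hd : size rest < d.
      rewrite ltnNge; apply/negP => Hd.
      by rewrite forced_yes // in Hok; apply: leq_trans Hm.
    have Hc := no_child Ht Hok.
    have Hc0 : 0 < size (children g xs) by case: (children g xs) Hc.
    rewrite /no_upd /cur /= Hd Hc0 /=.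
    case/(has_nthP [::]): Hc => i Hi /andP [Hti Hmi].
    split.
    * exists 0, i; split; rewrite /= ?orbT ?subn0 //; lia.
    * have := @push_pot ((g :: L) :: rest) (children g xs). rewrite /= Hc0 Hb Hd.
      move=> /(_ isT isT isT). lia.
- case Hok: (rok (cur st) xs); rewrite /step /=.
  + split; last by rewrite yes_upd_pot addn0.
    exists n, p. have [E1 E2] := yes_upd_size st xs n.
    rewrite yes_upd_nth // E1 E2. by split.
  + rewrite /no_upd. case: ifP => [/andP [Hd Hc0] | _].
    * split.
      -- exists n.+1, p; split; rewrite /= ?ppos //; lia.
      -- have := @push_pot st (children (cur st) xs). rewrite Hc0 Hb.
         have Hs : 0 < size st by case: (st) Hn.
         move=> /(_ Hs Hd isT). lia.
    * have [n' [p' [H1 H2 H3 H4 /andP [H5 H6]]]] := @pop_spec st n p Hn (introT andP (conj ppos Hp)).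
      split.
      -- exists n', p'; split => //; by rewrite H3 // H4.
      -- rewrite /pot. have := Sd_pos (d - (size st).-1). rewrite /S in H6 *. lia.
Qed.

Lemma main_lemma rs H : all (fun xs => size xs == r) rs -> Inv (stateOf H) ->
  amb_mistakes Lrn f H rs < pot (stateOf H).
Proof.
elim: rs H => [|xs rs IH] H /=.
- move=> _ _. rewrite /pot. have := Sd_pos (d - (size (stateOf H)).-1). rewrite /S. lia.
- case/andP => /eqP Hxs Hall HI.
  rewrite round_ok_rok /=.
  have [HI' Hp] := step_ok Hxs HI.
  have := IH (rcons H (xs, rok (cur (stateOf H)) xs)) Hall.
  rewrite /stateOf foldl_rcons -/(stateOf H) => /(_ HI'). lia.
Qed.

Lemma init_inv : Inv (stateOf [::]).
Proof. by exists 0, 0; split. Qed.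

Lemma Sd_bound n : 0 < r -> b * Sd n <= (b + r) ^ n.+1.
Proof.
move=> r0. elim: n => [|n IH] /=; first by rewrite muln1 expn1 leq_addr.
have HP : b + r <= (b + r) ^ n.+1.
  by rewrite expnS leq_pmulr // expn_gt0 addn_gt0 r0 orbT.
rewrite expnS. set P := (b + r) ^ n.+1 in IH HP *.
nia.
Qed.

End Pf.

Theorem mainTheorem10 (r : nat) (X : Type) (Y : finType)
    (F : (X -> Y) -> Prop) (d : nat) :
  0 < r -> opt_std_is F d -> d <= r ->
  amb_bound r F ((r * #|Y|) ^ d).
Proof.
move=> r0 [[L0 HL0] _] _.
exists (Lrn L0 d). move=> f Hf rs Hrs.
have := @main_lemma X Y L0 d r f (HL0 f Hf) rs [::] Hrs (init_inv L0 d f).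
rewrite /pot /= /S subn0.
have := @Sd_bound Y r (d.-1) r0.
case: d {HL0} => [|n] /=; first by lia.
case k: #|Y| => [|k'] //=.
- rewrite /b k /= muln0 mul0n. lia.
- rewrite /b k /= mulnS. rewrite (addnC r). lia.
Qed.
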